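(* Let $n$ be an odd positive integer having a unique prime divisor $p'$ with $v_{p'}(n)=2$, such that $v_q(n)=1$ for every prime divisor $q\neq p'$ of $n$, and let $A=S(n)$. Let $S=(x_1,\ldots,x_l)$ be a sequence in $\mathbb{Z}_n$ such that for every prime divisor $p$ of $n$, at least two terms of $S$ are coprime to $p$. Let $n'=n/p'^{\,2}$ and let $S'$ be the image of $S$ under the natural map $\mathbb{Z}_n\to\mathbb{Z}_{n'}$. Suppose at most one term of $S'$ is a unit. Then $S$ is an $A$-weighted zero-sum sequence.
   Context: $\mathbb{Z}_m$ is the integers mod $m$, $U(m)$ its unit group; $v_p(n)=r$ means $p^r\mid n$, $p^{r+1}\nmid n$. For $A\subseteq\mathbb{Z}_n$, a sequence $(x_1,\ldots,x_l)$ is an $A$-weighted zero-sum sequence if there exist $a_i\in A$ with $\sum a_ix_i=0$. For odd $m=\prod p_i^{r_i}$ and $a\in U(m)$, $\left(\frac{a}{m}\right)=\prod\left(\frac{a}{p_i}\right)^{r_i}$ (Legendre symbols of images mod $p_i$), and $S(m)$ is the kernel of $a\mapsto\left(\frac{a}{m}\right)$ on $U(m)$. *)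

(* Defs.v *)
From HB Require Import structures.
From mathcomp Require Import all_boot all_order all_algebra.
Set Implicit Arguments. Unset Strict Implicit. Unset Printing Implicit Defensive.
Import Order.TTheory GRing.Theory Num.Theory.

Definition is_sq_mod (a p : nat) : bool :=
  [exists x : 'I_p, (x * x) %% p == a %% p].

Definition legendre (a p : nat) : int :=
  if p %| a then 0%R else if is_sq_mod a p then 1%R else (-1)%R.

Definition jacobi (a m : nat) : int :=
  (\prod_(p <- primes m) (legendre a p) ^+ (logn p m))%R.

Definition inS (m : nat) (a : 'Z_m) : bool :=
  coprime a m && (jacobi a m == 1%R).

Definition weighted_zero_sum (n : nat) (A : pred 'Z_n) (s : seq 'Z_n) : Prop :=
  exists w : nat -> 'Z_n,
    (forall i, i < size s -> w i \in A) /\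
    (\sum_(i < size s) w i * s`_i = 0)%R.

(* Main.v *)
Require Import Defs.
From mathcomp Require Import all_boot all_order all_algebra.
From mathcomp Require Import zify.
From Stdlib Require Import Lia ClassicalEpsilon.
Set Implicit Arguments. Unset Strict Implicit. Unset Printing Implicit Defensive.

Lemma solve_lin (M a c : nat) : 1 < M -> coprime a M -> coprime c M ->
  exists u, coprime u M /\ M %| u * a + c.
Proof.
move=> M1 caM ccM.
have caM' : coprime a M by [].
set C := chinese a M 0 1.
have C0 : C %% a = 0.
  by rewrite /C (chinese_modl caM) mod0n.
have C1 : C %% M = 1.
  by rewrite /C (chinese_modr caM) modn_small.
have [t Ht] : exists t, C = t * a.
  exists (C %/ a); by rewrite {1}(divn_eq C a) C0 addn0.
have ctM : coprime t M.
  have : coprime C M by rewrite -coprime_modl C1 coprime1n.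
  by rewrite Ht coprimeMl => /andP[].
exists (t * c * M.-1); split.
  rewrite !coprimeMl ctM ccM /=.
  have -> : M = M.-1.+1 by rewrite prednK // ltnW.
  by rewrite /= coprimenS.
have -> : t * c * M.-1 * a + c = (t * a) * (c * M.-1) + c.
  by rewrite mulnC -!mulnA; congr (_ + _); rewrite mulnCA (mulnC a) -!mulnA.
have Hta : (t * a) %% M = 1 by rewrite -Ht.
rewrite /dvdn -modnDml -modnMml Hta mul1n modnDml -{2}(muln1 c) -mulnDr addn1.
by rewrite prednK ?modnMl // ltnW.
Qed.


Lemma L1 (q e l : nat) (x : nat -> nat) (i0 k : nat) :
  prime q -> odd q -> 0 < e -> k < l -> coprime (x k) q -> k != i0 ->
  (exists2 j, j < l & (j != k) && coprime (x j) q) ->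
  exists f : nat -> nat, (forall i, coprime (f i) q) /\ f i0 = 1 /\
     q ^ e %| \sum_(i < l) f i * x i.
Proof.
move=> pq oq e0 kl cxk ki0 [j jl /andP[jk cxj]].
have q1 : 1 < q by apply: prime_gt1.
have M1 : 1 < q ^ e.
  by rewrite -(expn0 q) ltn_exp2l.
have cxkM : coprime (x k) (q ^ e) by rewrite coprime_pexpr.
set S := \sum_(i < l | (i : nat) != k) x i.
have split_sum : forall f : nat -> nat, \sum_(i < l) f i * x i =
     f k * x k + \sum_(i < l | (i : nat) != k) f i * x i.
  move=> f; rewrite (bigD1 (Ordinal kl)) //=; congr (_ + _).
have [cS | ncS] := boolP (coprime S q).
  have cSM : coprime S (q ^ e) by rewrite coprime_pexpr.
  have [u [cu du]] := solve_lin M1 cxkM cSM.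
  pose f := fun i : nat => if i == k then u else 1.
  exists f; split; last split.
  - by move=> i; rewrite /f; case: ifP => _; rewrite ?coprime1n // -(coprime_pexpr _ _ e0).
  - by rewrite /f eq_sym (negbTE ki0).
  rewrite split_sum /f eqxx mulnC.
  rewrite (_ : \sum_(i < l | (i : nat) != k) _ = S); first by rewrite mulnC.
  by rewrite /S; apply: eq_bigr => i /negbTE ->; rewrite mul1n.
have qS : q %| S by move: ncS; rewrite coprime_sym prime_coprime // negbK.
have [l0 [l0l [l0k [l0i cl0]]]] :
    exists l0, l0 < l /\ l0 != k /\ l0 != i0 /\ coprime (x l0) q.
  case: (eqVneq j i0) => [ji0 | ji0]; last by exists j.
  case: (pickP [pred i : 'I_l | ((i:nat) != k) && ((i:nat) != i0) && coprime (x i) q]).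
    by move=> i /= /andP[/andP[ik ii0] ci]; exists i.
  move=> none; exfalso; subst i0.
  have : q %| x j.
    move: qS; rewrite /S (bigD1 (Ordinal jl)) /=; last by [].
    rewrite dvdn_addl //; apply: dvdn_sum => i /andP[ik ii0].
    have ij : (i : nat) != j by apply: contra ii0 => /eqP h; apply/eqP/val_inj.
    have := none i; rewrite /= ik ij.
    by rewrite /= coprime_sym prime_coprime // => /negbFE.
  by move: cxj; rewrite coprime_sym prime_coprime // => /negP.
set R := \sum_(i < l | ((i : nat) != k) && ((i : nat) != l0)) x i.
have hS : S = x l0 + R.
  rewrite /S (bigD1 (Ordinal l0l)) /=; last by [].
  congr (_ + _); apply: eq_bigl => i; congr (_ && _); by rewrite -val_eqE.
have cS' : coprime (S + x l0) (q ^ e).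
  by rewrite coprime_pexpr // coprime_sym prime_coprime // dvdn_addr // -prime_coprime // coprime_sym.
have [u [cu du]] := solve_lin M1 cxkM cS'.
pose f := fun i : nat => if i == k then u else if i == l0 then 2 else 1.
exists f; split; last split.
- move=> i; rewrite /f; case: ifP => _; first by rewrite -(coprime_pexpr _ _ e0).
  case: ifP => _; last by rewrite coprime1n.
  by rewrite coprime2n.
- by rewrite /f eq_sym (negbTE ki0) eq_sym (negbTE l0i).
rewrite split_sum /f eqxx mulnC.
have -> : \sum_(i < l | (i : nat) != k) (if (i : nat) == k then u else if (i:nat) == l0 then 2 else 1) * x i
   = 2 * x l0 + R.
  rewrite (bigD1 (Ordinal l0l)) /=; last by [].
  rewrite (negbTE l0k) eqxx; congr (_ + _).
  rewrite /R; apply: eq_big => i.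
    by congr (_ && _); rewrite -val_eqE.
  move=> /andP[ik il0]; rewrite (negbTE ik).
  have -> : ((i : nat) == l0) = false.
    by apply/negbTE; apply: contra il0 => /eqP h; apply/eqP/val_inj.
  by rewrite mul1n.
by move: du; rewrite hS addnAC (mulnC u) mul2n addnn.
Qed.


Lemma onto_inj (T : finType) (f : T -> T) : (forall y, y \in codom f) -> injective f.
Proof.
move=> onto; apply/injectiveP; rewrite /injectiveb /dinjectiveb.
apply: (@leq_size_uniq _ (enum T)); first exact: enum_uniq.
  by move=> y _; apply: onto.
by rewrite size_map -cardE.
Qed.

Lemma nonres r : prime r -> odd r -> exists a, ~~ (r %| a) /\ ~~ is_sq_mod a r.
Proof.
move=> pr odr.
have r1 : 1 < r by apply: prime_gt1.
have r2 : 2 < r.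
  by move: r1 odr; case: r pr => [|[|[|]]].
have r0 : 0 < r by apply: ltnW.
pose sq := fun y : 'I_r => Ordinal (ltn_pmod (y * y) r0).
have ninj : ~ injective sq.
  move=> inj.
  have h1 : (r.-1 < r) by rewrite prednK.
  have := @inj (Ordinal r1) (Ordinal h1).
  have e : sq (Ordinal r1) = sq (Ordinal h1).
    apply: val_inj => /=.
    case: r r2 {r1 r0 pr odr sq inj h1} => [|[|t]] //= _.
    rewrite (_ : t.+1 * t.+1 = t * t.+2 + 1); last first.
      nia.
    by rewrite modnMDl.
  move=> /(_ e) /(congr1 val) /= h.
  by move: r2; rewrite -(prednK r0) -h.
have [y ny] : exists y, y \notin codom sq.
  case: (pickP [pred y | y \notin codom sq]) => [y /= hy | none]; first by exists y.
  exfalso; apply: ninj; apply: onto_inj => y.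
  by have := none y; rewrite /= => /negbFE.
have y0 : 0 < y.
  rewrite lt0n; apply: contra ny => /eqP y0.
  apply/codomP; exists (Ordinal r0); apply: val_inj => /=; by rewrite y0 mod0n.
exists y; split.
  by apply/negP => /(dvdn_leq y0); rewrite leqNgt ltn_ord.
apply: contra ny => /existsP [x /eqP hx].
apply/codomP; exists x; apply: val_inj => /=.
by rewrite hx modn_small.
Qed.

Lemma legendre_mod a b p : a = b %[mod p] -> legendre a p = legendre b p.
Proof. by move=> h; rewrite /legendre /is_sq_mod /dvdn h. Qed.

Lemma legendre1 p : 1 < p -> legendre 1 p = 1%R.
Proof.
move=> p1; rewrite /legendre.
have -> : (p %| 1) = false by apply/negbTE; rewrite dvdn1 neq_ltn p1 orbT.
suff -> : is_sq_mod 1 p by [].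
by apply/existsP; exists (Ordinal p1).
Qed.

Lemma legendre_pm a p : ~~ (p %| a) -> legendre a p = 1%R \/ legendre a p = (-1)%R.
Proof. by move=> h; rewrite /legendre (negbTE h); case: ifP; [left|right]. Qed.

Lemma legendre_nr a p : ~~ (p %| a) -> ~~ is_sq_mod a p -> legendre a p = (-1)%R.
Proof. by move=> h1 h2; rewrite /legendre (negbTE h1) (negbTE h2). Qed.



Lemma count_ex0 (T : Type) (x0 : T) (P : pred T) (s : seq T) :
  0 < count P s -> exists2 j, j < size s & P (nth x0 s j).
Proof. by rewrite -has_count => /(has_nthP x0). Qed.

Lemma count_ex1 (T : Type) (x0 : T) (P : pred T) (s : seq T) a :
  1 < count P s -> exists2 j, j < size s & (j != a) && P (nth x0 s j).
Proof.
elim: s a => [|y s IH] a //=.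
case: a => [|a].
  move=> h; have [j js Pj] : exists2 j, j < size s & P (nth x0 s j).
    apply: count_ex0; case: (P y) h => /=; lia.
  by exists j.+1.
case Py: (P y) => /= h.
  by exists 0 => //=; rewrite Py.
have [j js /andP[ja Pj]] := IH a h.
by exists j.+1 => //=; rewrite eqSS ja.
Qed.

Lemma count_uniq (T : Type) (x0 : T) (P : pred T) (s : seq T) a b :
  count P s <= 1 -> a < size s -> b < size s ->
  P (nth x0 s a) -> P (nth x0 s b) -> a = b.
Proof.
elim: s a b => [|y s IH] a b //=.
case: a => [|a]; case: b => [|b] //= h ha hb Pa Pb.
- exfalso; have : has P s by apply/(has_nthP x0); exists b.
  by rewrite has_count; move: h; rewrite Pa /=; lia.
- exfalso; have : has P s by apply/(has_nthP x0); exists a.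
  by rewrite has_count; move: h; rewrite Pb /=; lia.
- by congr S; apply: IH; rewrite // -(leq_add2l (P y)) (leq_trans h) // leq_addl.
Qed.

Import GRing.Theory.

Lemma coprime_primes a n : 0 < n ->
  (forall p, p \in primes n -> ~~ (p %| a)) -> coprime a n.
Proof.
move=> n0 h; apply/negPn/negP => nc.
have g1 : 1 < gcdn a n.
  by move: nc; rewrite /coprime; have := gcdn_gt0 a n; rewrite n0 orbT; lia.
have pg := pdiv_prime g1.
have := h (pdiv (gcdn a n)); rewrite mem_primes pg n0.
rewrite (dvdn_trans (pdiv_dvd _) (dvdn_gcdr _ _)) /= => /(_ isT) /negP; apply.
exact: dvdn_trans (pdiv_dvd _) (dvdn_gcdl _ _).
Qed.

Theorem lemma4p3 (n p' : nat) (s : seq 'Z_n) :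
  odd n -> 0 < n ->
  prime p' -> logn p' n = 2 ->
  (forall q, prime q -> q %| n -> q != p' -> logn q n = 1) ->
  (forall p, prime p -> p %| n ->
     1 < count (fun x : 'Z_n => coprime (nat_of_ord x) p) s) ->
  count (fun x : 'Z_n => coprime ((nat_of_ord x) %% (n %/ p' ^ 2)) (n %/ p' ^ 2)) s
    <= 1 ->
  weighted_zero_sum (@inS n) s.
Proof.
move=> odn n0 pp lp Hq Hc Hu.
set m := n %/ p' ^ 2 in Hu.
have p'n : p' \in primes n by rewrite -logn_gt0 lp.
have p'dn : p' %| n by move: p'n; rewrite mem_primes => /and3P[].
have p'1 : 1 < p' by apply: prime_gt1.
have n1 : 1 < n by apply: leq_trans p'1 (dvdn_leq n0 p'dn).
have dpn : p' ^ 2 %| n by rewrite pfactor_dvdn // lp.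
have nE : n = m * p' ^ 2 by rewrite divnK.
have m0 : 0 < m by move: n0; rewrite nE muln_gt0 => /andP[].
have npm : ~~ (p' %| m).
  apply/negP => h; have : p' ^ 3 %| n.
    by rewrite nE (expnS p' 2); apply: dvdn_mul.  
  by rewrite pfactor_dvdn // lp.
have odp : forall p, p \in primes n -> odd p.
  move=> p; rewrite mem_primes => /and3P[pp0 _ pdn].
  case: (even_prime pp0) => // p2; subst p.
  by move: pdn; rewrite dvdn2 odn.
have primesP : forall p, p \in primes n -> prime p /\ p %| n.
  by move=> p; rewrite mem_primes => /and3P[].
set l := size s.
pose x := fun i : nat => nat_of_ord (nth (0%R : 'Z_n) s i).
pose Ui := fun i : nat => coprime (x i %% m) m.
have [i0 Hi0] : exists i0, forall i, i < l -> Ui i -> i = i0.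
  case: (pickP [pred i : 'I_l | Ui i]) => [i /= Ui0 | none].
    exists i => j jl Uj.
    exact: (@count_uniq _ (0%R : 'Z_n) _ s j i Hu).
  exists 0 => j jl Uj; have := none (Ordinal jl); by rewrite /= Uj.
have HF : forall p, exists f : nat -> nat, p \in primes n ->
    (forall i, coprime (f i) p) /\ f i0 = 1 /\ n`_p %| \sum_(i < l) f i * x i.
  move=> p; case pn: (p \in primes n); last by exists id.
  have [pp0 pdn] := primesP p pn.
  have [k kl /andP[ki0 ck]] := count_ex1 (0%R : 'Z_n) i0 (Hc p pp0 pdn).
  have [j jl jk] := count_ex1 (0%R : 'Z_n) k (Hc p pp0 pdn).
  have lg0 : 0 < logn p n by rewrite logn_gt0.
  have [f [f1 [f2 f3]]] := L1 (e := logn p n) (x := x) pp0 (odp p pn) lg0 kl ck ki0 (ex_intro2 _ _ j jl jk).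
  by exists f => _; rewrite p_part.
pose F := fun p => proj1_sig (constructive_indefinite_description _ (HF p)).
have FP : forall p, p \in primes n ->
    (forall i, coprime (F p i) p) /\ F p i0 = 1 /\ n`_p %| \sum_(i < l) F p i * x i.
  by move=> p; exact: (proj2_sig (constructive_indefinite_description _ (HF p))).
have HN : forall r, exists a, r \in primes n -> ~~ (r %| a) /\ ~~ is_sq_mod a r.
  move=> r; case rn: (r \in primes n); last by exists 0.
  have [a ha] := nonres (proj1 (primesP r rn)) (odp r rn).
  by exists a.
pose NR := fun r => proj1_sig (constructive_indefinite_description _ (HN r)).
have NRP : forall r, r \in primes n -> ~~ (r %| NR r) /\ ~~ is_sq_mod (NR r) r.
  by move=> r; exact: (proj2_sig (constructive_indefinite_description _ (HN r))).
pose r := fun i => pdiv (gcdn (x i) m).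
have rP : forall i, ~~ Ui i -> [/\ r i \in primes n, r i != p' & r i %| x i].
  move=> i nU.
  have g1 : 1 < gcdn (x i) m.
    move: nU; rewrite /Ui coprime_modl /coprime.
    by have := gcdn_gt0 (x i) m; rewrite m0 orbT; lia.
  have rp := pdiv_prime g1.
  have rm : r i %| m := dvdn_trans (pdiv_dvd _) (dvdn_gcdr _ _).
  split.
  - by rewrite mem_primes rp n0 /= nE dvdn_mulr.
  - by apply: contra npm => /eqP <-.
  - exact: dvdn_trans (pdiv_dvd _) (dvdn_gcdl _ _).
pose P := fun i => (\prod_(p <- primes n | (p != p') && (p != r i)) legendre (F p i) p)%R.
pose g := fun i => if P i == 1%R then 1 else NR (r i).
pose Lw := fun i p => if (p != p') && ~~ Ui i && (p == r i) then g i else F p i.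
pose e := fun p => chinese (n`_p) (n`_p^') 1 0.
pose w := fun i => \sum_(p <- primes n) e p * Lw i p.
have Lwc : forall i p, p \in primes n -> coprime (Lw i p) p.
  move=> i p pn; rewrite /Lw; case: ifP => [/andP[/andP[_ nU] /eqP ->] | _]; last first.
    by have [h _] := FP p pn; apply: h.
  rewrite /g; case: ifP => _; first by rewrite coprime1n.
  have [rn _ _] := rP i nU.
  have [h _] := NRP _ rn.
  by rewrite coprime_sym prime_coprime // (proj1 (primesP _ rn)).
have Wmod : forall i p0, p0 \in primes n -> w i = Lw i p0 %[mod n`_p0].
  move=> i p0 p0n; rewrite /w (bigD1_seq p0) ?primes_uniq //=.
  have d : n`_p0 %| \sum_(p <- primes n | p != p0) e p * Lw i p.
    rewrite big_seq_cond; apply: dvdn_sum => p /andP[pn pp0]; apply: dvdn_mulr.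
    have cp : coprime n`_p0 n`_p.
      rewrite !p_part; apply: coprimeXl; apply: coprimeXr.
      rewrite prime_coprime ?(proj1 (primesP _ p0n)) // dvdn_prime2 ?(proj1 (primesP _ p0n)) ?(proj1 (primesP _ pn)) //.
      by rewrite eq_sym.
    apply: (@dvdn_trans n`_p^').
      by rewrite -(Gauss_dvdr _ cp) partnC // dvdn_part.
    by rewrite /dvdn /e chinese_modr ?coprime_partC // mod0n.
  rewrite -modnDmr (eqP d) addn0 -modnMml /e chinese_modl ?coprime_partC //.
  by rewrite modnMml mul1n.
have Sdiv : n %| \sum_(i < l) w i * x i.
  apply/(dvdn_partP _ n0) => p pn.
  have [F1 [F2 F3]] := FP p pn.
  have E : (\sum_(i < l) w i * x i) %% n`_p = (\sum_(i < l) Lw i p * x i) %% n`_p.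
    rewrite -[LHS]modn_summ -[RHS]modn_summ.
    by congr (_ %% _); apply: eq_bigr => i _; rewrite -modnMml Wmod // modnMml.
  rewrite /dvdn E; change (n`_p %| \sum_(i < l) Lw i p * x i).
  case: (eqVneq p p') => [ep | pp'].
    subst p; move: F3; congr (_ %| _); apply: eq_bigr => i _.
    by rewrite /Lw eqxx.
  have [pp0 pdn] := primesP p pn.
  have np : n`_p = p by rewrite p_part Hq // expn1.
  move: F3; rewrite np /dvdn => /eqP F3.
  apply/eqP; rewrite -[RHS]F3 -[LHS]modn_summ -[RHS]modn_summ.
  congr (_ %% _); apply: eq_bigr => i _.
  rewrite /Lw; case: ifP => [/andP[/andP[_ nU] /eqP ->]|//].
  have [_ _ rx] := rP i nU.
  by rewrite (eqP (dvdn_mull _ rx)) (eqP (dvdn_mull _ rx)).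
have wmodp : forall i p, p \in primes n -> w i %% n %% p = Lw i p %% p.
  move=> i p pn; have [pp0 pdn] := primesP p pn.
  have hp : p %| n`_p by rewrite p_part dvdn_exp ?logn_gt0.
  by rewrite modn_dvdm // -(modn_dvdm (w i) hp) Wmod // modn_dvdm.
exists (fun i => ((w i)%:R)%R : 'Z_n); split.
  move=> i il.
  rewrite unfold_in /inS val_Zp_nat //.
  have ndv : forall p, p \in primes n -> ~~ (p %| w i %% n).
    move=> p pn; rewrite /dvdn wmodp // -/(dvdn p (Lw i p)).
    by rewrite -prime_coprime ?(proj1 (primesP _ pn)) // coprime_sym Lwc.
  apply/andP; split.
    by apply: coprime_primes.
  have lpm : forall p, p \in primes n -> legendre (w i %% n) p = legendre (Lw i p) p.
    by move=> p pn; apply: legendre_mod; rewrite wmodp.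
  have lpm1 : forall p, p \in primes n ->
      legendre (Lw i p) p = 1%R \/ legendre (Lw i p) p = (-1)%R.
    move=> p pn; apply: legendre_pm.
    by rewrite -prime_coprime ?(proj1 (primesP _ pn)) // coprime_sym Lwc.
  rewrite /jacobi (eq_big_seq (fun p => (legendre (Lw i p) p ^+ logn p n)%R)); last first.
    by move=> p pn; rewrite lpm.
  rewrite (bigD1_seq p') ?primes_uniq //= lp.
  have -> : (legendre (Lw i p') p' ^+ 2 = 1)%R.
    by case: (lpm1 p' p'n) => ->; rewrite ?sqrrN expr1n.
  rewrite mul1r.
  rewrite big_seq_cond (eq_bigr (fun p => legendre (Lw i p) p)); last first.
    move=> p /andP[pn pp']; have [pp0 pdn] := primesP p pn.
    by rewrite Hq // expr1.
  rewrite -big_seq_cond.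
  case: (boolP (Ui i)) => [Uii | nU].
    have ii0 := Hi0 i il Uii; subst i0.
    rewrite big1_seq // => p /andP[pp' pn].
    rewrite /Lw Uii andbF /=.
    have [_ [-> _]] := FP p pn.
    by apply: legendre1; apply: prime_gt1; apply: (proj1 (primesP p pn)).
  have [rn rp' rx] := rP i nU.
  rewrite -big_filter (bigD1_seq (r i)) ?filter_uniq ?primes_uniq //; last first.
    by rewrite mem_filter rp'.
  rewrite big_filter_cond.
  have -> : (\prod_(p <- primes n | (p != p') && (p != r i)) legendre (Lw i p) p)%R = P i.
    apply: eq_bigr => p /andP[_ pr].
    by rewrite /Lw (negbTE pr) andbF.
  rewrite /Lw rp' nU eqxx /= /g.
  have Ppm : P i = 1%R \/ P i = (-1)%R.
    rewrite /P big_seq_cond.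
    apply: (big_ind (fun v : int => v = 1%R \/ v = (-1)%R)); first by left.
      move=> a b [->|->] [->|->]; rewrite ?mul1r ?mulr1 ?mulrNN ?mulr1; by [left|right|left].
    move=> p /andP[pn _]; apply: legendre_pm.
    have [h _] := FP p pn.
    by rewrite -prime_coprime ?(proj1 (primesP _ pn)) // coprime_sym h.
  case: Ppm => ->; rewrite ?eqxx.
    by rewrite legendre1 ?mulr1 // prime_gt1 // (proj1 (primesP _ rn)).
  have [h1 h2] := NRP _ rn.
  have -> : (((-1)%R : int) == 1%R) = false by [].  
  by rewrite legendre_nr // mulrNN mulr1.
have -> : (\sum_(i < size s) (w i)%:R * s`_i)%R = ((\sum_(i < l) w i * x i)%:R : 'Z_n)%R.
  by rewrite natr_sum; apply: eq_bigr => i _; rewrite natrM natr_Zp.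
have [c ->] := dvdnP Sdiv.
by rewrite natrM pchar_Zp // mulr0.
Qed.
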